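(* Fix $\mu\in\mathcal P$ and a sample set $\{y^1,\dots,y^N\}\subset\Xi$, $N\ge2$. With all quantities defined as in the context (evaluated at $(y^n,\mu)$ for each sample), \begin{align*} &\big|V[l(u)]-V[l(u^R)]+V[r(u^R_{(1)})]+\underline E[r(u^R_{(2)})]-\underline E[r(u^R_{(3)})]-E[r(u^R_{(4)})]\big|\\ &\le \underline E\Big[\frac{\|r\|_{X'}^2\|r_{(1)}\|_{X'}^2}{\alpha^2}\Big]+E\Big[\frac{\|r\|_{X'}\|r_{(1)}\|_{X'}}{\alpha}\Big]\,\underline E\Big[\frac{\|r\|_{X'}\|r_{(1)}\|_{X'}}{\alpha}\Big] +\underline E\Big[\frac{\big\|r_{(2)}-r_{(3)}-\frac{N-1}{N}r_{(4)}\big\|_{X'}\,\|r\|_{X'}}{\alpha}\Big]. \end{align*}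
   Context: $X$ is a real separable Hilbert space; $\Xi\subset\mathbb R^K$ and $\mathcal P\subset\mathbb R^P$ are parameter domains. For each $(y,\mu)$, $a(\cdot,\cdot;y,\mu)$ is a bounded bilinear form on $X\times X$, coercive with coercivity factor $\alpha(y,\mu):=\inf_{v\ne0}a(v,v;y,\mu)/\|v\|_X^2>0$, and $f(\cdot;y,\mu)$, $l(\cdot;y,\mu)$ are bounded linear forms on $X$. Dual norm $\|F\|_{X'}:=\sup_{v\ne0}|F(v)|/\|v\|_X$. For a function $g$ of $y$ and samples $y^1,\dots,y^N$, define $E[g]:=\frac1N\sum_{n}g(y^n)$, $\underline E[g]:=\frac1{N-1}\sum_n g(y^n)$, $V[g]:=\underline E[g^2]-\underline E[g]E[g]$. Fix subspaces $X^R,X^R_{(1)},\dots,X^R_{(4)}\subset X$. For each $(y,\mu)$ (forms evaluated at $(y,\mu)$): $u\in X$ solves $a(u,v)=f(v)$ $\forall v\in X$; $u^R\in X^R$ solves $a(u^R,v)=f(v)$ $\forall v\in X^R$; residual $r(\cdot):=f(\cdot)-a(u^R,\cdot)$. Linear forms: $l_{(1)}(\cdot):=l(\cdot)$; $l_{(2)}(\cdot):=2\big(l(u^R)-r(u^R_{(1)})\big)l(\cdot)$; $l_{(3)}(\cdot):=E\big[l(u^R)-r(u^R_{(1)})\big]\,l(\cdot)$; $l_{(4)}(\cdot):=\underline E\big[l(u^R)-r(u^R_{(1)})\big]\,l(\cdot)$, where in $l_{(3)},l_{(4)}$ the Monte Carlo means are taken over the samples (so they are scalars independent of $y$). For $i=1,\dots,4$,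 $u^R_{(i)}\in X^R_{(i)}$ solves $a(v,u^R_{(i)})=-l_{(i)}(v)$ for all $v\in X^R_{(i)}$ (defined successively), and $r_{(i)}(\cdot):=-l_{(i)}(\cdot)-a(\cdot,u^R_{(i)})$. *)

(* Defs.v *)
From Stdlib Require Import Reals Lra ClassicalEpsilon.
Open Scope R_scope.

Record Hilbert := {
  hcar :> Type;
  hzero : hcar;
  hadd : hcar -> hcar -> hcar;
  hopp : hcar -> hcar;
  hscal : R -> hcar -> hcar;
  hinner : hcar -> hcar -> R;
  hadd_assoc : forall x y z, hadd x (hadd y z) = hadd (hadd x y) z;
  hadd_comm : forall x y, hadd x y = hadd y x;
  hadd_0 : forall x, hadd x hzero = x;
  hadd_opp : forall x, hadd x (hopp x) = hzero;
  hscal_assoc : forall a b x, hscal a (hscal b x) = hscal (a * b) x;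
  hscal_1 : forall x, hscal 1 x = x;
  hscal_distr_v : forall a x y, hscal a (hadd x y) = hadd (hscal a x) (hscal a y);
  hscal_distr_s : forall a b x, hscal (a + b) x = hadd (hscal a x) (hscal b x);
  hinner_sym : forall x y, hinner x y = hinner y x;
  hinner_add_l : forall x y z, hinner (hadd x y) z = hinner x z + hinner y z;
  hinner_scal_l : forall a x y, hinner (hscal a x) y = a * hinner x y;
  hinner_nonneg : forall x, 0 <= hinner x x;
  hinner_def : forall x, hinner x x = 0 -> x = hzero;
  hcomplete : forall s : nat -> hcar,
    (forall eps, eps > 0 -> exists M, forall m n, (m >= M)%nat -> (n >= M)%nat ->
       sqrt (hinner (hadd (s m) (hopp (s n))) (hadd (s m) (hopp (s n)))) < eps) ->
    exists x, forall eps, eps > 0 -> exists M, forall n, (n >= M)%nat ->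
       sqrt (hinner (hadd (s n) (hopp x)) (hadd (s n) (hopp x))) < eps;
  hseparable : exists d : nat -> hcar, forall x eps, eps > 0 -> exists n,
       sqrt (hinner (hadd x (hopp (d n))) (hadd x (hopp (d n)))) < eps
}.

Arguments hzero {_}.
Arguments hadd {_}.
Arguments hopp {_}.
Arguments hscal {_}.
Arguments hinner {_}.

Definition hnorm {X : Hilbert} (x : X) : R := sqrt (hinner x x).

Definition Rsup (E : R -> Prop) : R := epsilon (inhabits 0) (is_lub E).

(* dual norm ||F||_{X'} = sup_{v<>0} |F v| / ||v||  (0 if X = {0}) *)
Definition dual_norm {X : Hilbert} (F : X -> R) : R :=
  Rsup (fun t => t = 0 \/ exists v : X, v <> hzero /\ t = Rabs (F v) / hnorm v).

(* coercivity factor alpha = inf_{v<>0} a(v,v)/||v||^2 *)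
Definition coercivity_factor {X : Hilbert} (a : X -> X -> R) : R :=
  - Rsup (fun t => exists v : X, v <> hzero /\ t = - (a v v / (hnorm v) ^ 2)).

Definition is_linear_form {X : Hilbert} (F : X -> R) : Prop :=
  (forall x y, F (hadd x y) = F x + F y) /\ (forall c x, F (hscal c x) = c * F x).

Definition bounded_linear_form {X : Hilbert} (F : X -> R) : Prop :=
  is_linear_form F /\ exists C, forall v, Rabs (F v) <= C * hnorm v.

Definition bounded_bilinear_form {X : Hilbert} (a : X -> X -> R) : Prop :=
  (forall v, is_linear_form (fun u => a u v)) /\
  (forall u, is_linear_form (fun v => a u v)) /\
  exists C, forall u v, Rabs (a u v) <= C * hnorm u * hnorm v.

Definition coercive {X : Hilbert} (a : X -> X -> R) : Prop :=
  exists c, c > 0 /\ forall v, a v v >= c * (hnorm v) ^ 2.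

Definition is_subspace {X : Hilbert} (S : X -> Prop) : Prop :=
  S hzero /\ (forall x y, S x -> S y -> S (hadd x y)) /\
  (forall c x, S x -> S (hscal c x)).

Fixpoint sumN (N : nat) (g : nat -> R) : R :=
  match N with O => 0 | S n => sumN n g + g n end.

Definition MC_E (N : nat) (g : nat -> R) : R := sumN N g / INR N.
Definition MC_Eu (N : nat) (g : nat -> R) : R := sumN N g / (INR N - 1).
Definition MC_V (N : nat) (g : nat -> R) : R :=
  MC_Eu N (fun n => g n ^ 2) - MC_Eu N g * MC_E N g.

(* Main.v *)
Require Import Defs.
From Stdlib Require Import Reals.
From Stdlib Require Vectors.Fin.
Open Scope R_scope.
From Stdlib Require Import Lra Lia ClassicalEpsilon.
Lemma sumN_ext N g h : (forall n, (n < N)%nat -> g n = h n) -> sumN N g = sumN N h.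
Proof. induction N; intros H; simpl; auto. rewrite IHN; [rewrite H; auto|intros; apply H; lia]. Qed.

Lemma sumN_le N g h : (forall n, (n < N)%nat -> g n <= h n) -> sumN N g <= sumN N h.
Proof. induction N; intros H; simpl; [lra|]. assert (sumN N g <= sumN N h) by (apply IHN; intros; apply H; lia).
  assert (g N <= h N) by (apply H; lia). lra. Qed.

Lemma sumN_abs N g : Rabs (sumN N g) <= sumN N (fun n => Rabs (g n)).
Proof. induction N; simpl. rewrite Rabs_R0; lra.
  eapply Rle_trans; [apply Rabs_triang|]. lra. Qed.

Lemma MC_Eu_abs N g h : (2 <= N)%nat -> (forall n, (n < N)%nat -> Rabs (g n) <= h n) ->
  Rabs (MC_Eu N g) <= MC_Eu N h.
Proof. intros HN H. unfold MC_Eu.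
  assert (INR N >= 2) by (apply Rle_ge; replace 2 with (INR 2) by (simpl; lra); apply le_INR; lia).
  unfold Rdiv. rewrite Rabs_mult, (Rabs_right (/ (INR N - 1))) by (apply Rle_ge, Rlt_le, Rinv_0_lt_compat; lra).
  apply Rmult_le_compat_r; [apply Rlt_le, Rinv_0_lt_compat; lra|].
  eapply Rle_trans; [apply sumN_abs|]. apply sumN_le; auto. Qed.

Lemma MC_E_abs N g h : (2 <= N)%nat -> (forall n, (n < N)%nat -> Rabs (g n) <= h n) ->
  Rabs (MC_E N g) <= MC_E N h.
Proof. intros HN H. unfold MC_E.
  assert (INR N >= 2) by (apply Rle_ge; replace 2 with (INR 2) by (simpl; lra); apply le_INR; lia).
  unfold Rdiv. rewrite Rabs_mult, (Rabs_right (/ (INR N))) by (apply Rle_ge, Rlt_le, Rinv_0_lt_compat; lra).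
  apply Rmult_le_compat_r; [apply Rlt_le, Rinv_0_lt_compat; lra|].
  eapply Rle_trans; [apply sumN_abs|]. apply sumN_le; auto. Qed.

Lemma MC_Eu_ext N g h : (forall n, (n < N)%nat -> g n = h n) -> MC_Eu N g = MC_Eu N h.
Proof. intros; unfold MC_Eu; rewrite (sumN_ext N g h); auto. Qed.
Lemma MC_E_ext N g h : (forall n, (n < N)%nat -> g n = h n) -> MC_E N g = MC_E N h.
Proof. intros; unfold MC_E; rewrite (sumN_ext N g h); auto. Qed.
Lemma MC_V_ext N g h : (forall n, (n < N)%nat -> g n = h n) -> MC_V N g = MC_V N h.
Proof. intros; unfold MC_V. rewrite (MC_Eu_ext N g h), (MC_E_ext N g h), (MC_Eu_ext N (fun n => g n ^ 2) (fun n => h n ^2)); auto.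
  intros; rewrite H; auto. Qed.

Ltac sind := let M := fresh "M" in let IH := fresh "IH" in
  intro M; induction M as [|M IH]; cbn [sumN]; [ring | rewrite IH; ring].

Lemma core N p q d R2 R3 R4 c :
 (2 <= N)%nat -> c = (INR N - 1)/INR N ->
 MC_V N (fun n => p n - q n - d n) - MC_V N p + MC_V N q
 + MC_Eu N (fun n => 2*(p n - q n)*(d n + q n) - R2 n)
 - MC_Eu N (fun n => MC_E N (fun n => p n - q n)*(d n + q n) - R3 n)
 - MC_E N (fun n => MC_Eu N (fun n => p n - q n)*(d n + q n) - R4 n)
 = - MC_Eu N (fun n => R2 n - R3 n - c * R4 n) + MC_Eu N (fun n => d n ^ 2) - MC_Eu N d * MC_E N d.
Proof.
  intros HN Hc.
  assert (INR N >= 2) by (apply Rle_ge; replace 2 with (INR 2) by (simpl; lra); apply le_INR; lia).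
  assert (E1 : forall M, sumN M (fun n => (p n - q n - d n)^2) =
     sumN M (fun n => p n^2) + sumN M (fun n => q n^2) + sumN M (fun n => d n^2)
     - 2* sumN M (fun n => p n * q n) - 2* sumN M (fun n => p n * d n) + 2*sumN M (fun n => q n * d n)) by sind.
  assert (E2 : forall M, sumN M (fun n => p n - q n - d n) = sumN M p - sumN M q - sumN M d) by sind.
  assert (E3 : forall M, sumN M (fun n => p n - q n) = sumN M p - sumN M q) by sind.
  assert (E7 : forall M, sumN M (fun n => 2*(p n - q n)*(d n + q n) - R2 n) =
     2* sumN M (fun n => p n * d n) + 2* sumN M (fun n => p n * q n) - 2*sumN M (fun n => q n * d n)
     - 2* sumN M (fun n => q n^2) - sumN M R2) by sind.
  assert (E8 : forall M k R, sumN M (fun n => k*(d n + q n) - R n) = k*(sumN M d + sumN M q) - sumN M R) by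
    (intros M k R; induction M as [|M IH]; cbn [sumN]; [ring | rewrite IH; ring]).
  assert (E10 : forall M, sumN M (fun n => R2 n - R3 n - c * R4 n) = sumN M R2 - sumN M R3 - c * sumN M R4) by sind.
  unfold MC_V, MC_Eu, MC_E; cbv beta. rewrite E1, E2, !E8, E7, E10, !E3.
  subst c. field. lra.
Qed.



Lemma hinner_zero_l {X : Hilbert} (y : X) : hinner hzero y = 0.
Proof. pose proof (hinner_add_l X hzero hzero y) as H. rewrite hadd_0 in H. lra. Qed.

Lemma hnorm_zero {X : Hilbert} : hnorm (@hzero X) = 0.
Proof. unfold hnorm; rewrite hinner_zero_l; apply sqrt_0. Qed.

Lemma hnorm_nonneg {X : Hilbert} (v : X) : 0 <= hnorm v.
Proof. apply sqrt_pos. Qed.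

Lemma hnorm_pos {X : Hilbert} (v : X) : v <> hzero -> 0 < hnorm v.
Proof. intros H. unfold hnorm. apply sqrt_lt_R0.
  destruct (hinner_nonneg X v) as [|E]; auto. exfalso; apply H, hinner_def; auto. Qed.

Lemma hnorm_sq {X : Hilbert} (v : X) : hnorm v ^ 2 = hinner v v.
Proof. unfold hnorm. simpl. rewrite Rmult_1_r. apply sqrt_sqrt, hinner_nonneg. Qed.

Lemma lin_zero {X : Hilbert} (F : X -> R) : is_linear_form F -> F hzero = 0.
Proof. intros [Ha _]. pose proof (Ha hzero hzero) as H. rewrite hadd_0 in H. lra. Qed.

Lemma lin_opp {X : Hilbert} (F : X -> R) x : is_linear_form F -> F (hopp x) = - F x.
Proof. intros HF. pose proof (lin_zero F HF). destruct HF as [Ha _].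
  pose proof (Ha x (hopp x)) as E. rewrite hadd_opp in E. lra. Qed.

Lemma lin_sub {X : Hilbert} (F : X -> R) x y : is_linear_form F -> F (hadd x (hopp y)) = F x - F y.
Proof. intros HF. pose proof (lin_opp F y HF). destruct HF as [Ha _]. rewrite Ha. lra. Qed.

Definition bnd {X : Hilbert} (F : X -> R) := exists C, forall v, Rabs (F v) <= C * hnorm v.

Lemma dual_bound {X : Hilbert} (F : X -> R) : bnd F ->
  0 <= dual_norm F /\ forall v, Rabs (F v) <= dual_norm F * hnorm v.
Proof.
  intros [C HC].
  set (E := fun t => t = 0 \/ exists v : X, v <> hzero /\ t = Rabs (F v) / hnorm v).
  assert (Hl : exists m, is_lub E m).
  { destruct (completeness E) as [m Hm].
    - exists (Rmax C 0). intros t [->|[v [Hv ->]]]. apply Rmax_r.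
      pose proof (hnorm_pos v Hv). apply Rle_trans with C; [|apply Rmax_l].
      apply Rmult_le_reg_r with (hnorm v); auto. unfold Rdiv; rewrite Rmult_assoc, Rinv_l by lra.
      rewrite Rmult_1_r; auto.
    - exists 0; left; auto.
    - exists m; auto. }
  pose proof (epsilon_spec (inhabits 0) (is_lub E) Hl) as [Hub _].
  unfold dual_norm. fold E. split.
  - apply Hub. left; auto.
  - intros v. destruct (classic (v = hzero)) as [->|Hv].
    + rewrite hnorm_zero. specialize (HC hzero). rewrite hnorm_zero in HC. lra.
    + pose proof (hnorm_pos v Hv).
      assert (Rabs (F v) / hnorm v <= epsilon (inhabits 0) (is_lub E)) by (apply Hub; right; eauto).
      apply Rmult_le_reg_r with (/ hnorm v); [apply Rinv_0_lt_compat; auto|].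
      rewrite Rmult_assoc, Rinv_r by lra. rewrite Rmult_1_r. auto.
Qed.

Lemma bnd_sub {X : Hilbert} (F G : X -> R) : bnd F -> bnd G -> bnd (fun v => F v - G v).
Proof. intros [C1 H1] [C2 H2]. exists (C1 + C2). intros v.
  eapply Rle_trans; [apply Rabs_triang|]. rewrite Rabs_Ropp. specialize (H1 v); specialize (H2 v). lra. Qed.

Lemma bnd_opp {X : Hilbert} (F : X -> R) : bnd F -> bnd (fun v => - F v).
Proof. intros [C H]; exists C; intros v; rewrite Rabs_Ropp; auto. Qed.

Lemma bnd_scal {X : Hilbert} k (F : X -> R) : bnd F -> bnd (fun v => k * F v).
Proof. intros [C H]; exists (Rabs k * C); intros v; rewrite Rabs_mult, Rmult_assoc.
  apply Rmult_le_compat_l; auto using Rabs_pos. Qed.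

Lemma bnd_lin {X : Hilbert} (F : X -> R) : bounded_linear_form F -> bnd F.
Proof. intros [_ H]; exact H. Qed.

Lemma bnd_a1 {X : Hilbert} (a : X -> X -> R) w : bounded_bilinear_form a -> bnd (fun v => a v w).
Proof. intros [_ [_ [C H]]]. exists (C * hnorm w). intros v. rewrite (H v w). lra. Qed.

Lemma bnd_a2 {X : Hilbert} (a : X -> X -> R) w : bounded_bilinear_form a -> bnd (fun v => a w v).
Proof. intros [_ [_ [C H]]]. exists (C * hnorm w). intros v. rewrite (H w v). lra. Qed.

Lemma coerc_bound {X : Hilbert} (a : X -> X -> R) : bounded_bilinear_form a -> coercive a ->
  forall v, coercivity_factor a * hnorm v ^ 2 <= a v v.
Proof.
  intros Hb [c [Hc Hcv]] v.
  destruct (classic (v = hzero)) as [->|Hv].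
  - rewrite hnorm_zero. destruct Hb as [H1 _]. rewrite (lin_zero _ (H1 hzero)). lra.
  - set (E := fun t => exists v : X, v <> hzero /\ t = - (a v v / (hnorm v) ^ 2)).
    assert (Hl : exists m, is_lub E m).
    { destruct (completeness E) as [m Hm].
      - exists (- c). intros t [w [Hw ->]]. pose proof (hnorm_pos w Hw).
        assert (0 < hnorm w ^ 2) by (apply pow_lt; auto).
        specialize (Hcv w). apply Ropp_le_contravar.
        apply Rmult_le_reg_r with (hnorm w ^ 2); auto. unfold Rdiv; rewrite Rmult_assoc, Rinv_l by lra. lra.
      - exists (- (a v v / hnorm v ^ 2)). exists v; auto.
      - exists m; auto. }
    pose proof (epsilon_spec (inhabits 0) (is_lub E) Hl) as [Hub _].
    unfold coercivity_factor, Rsup. fold E.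
    assert (- (a v v / hnorm v ^ 2) <= epsilon (inhabits 0) (is_lub E)) by (apply Hub; exists v; auto).
    pose proof (hnorm_pos v Hv). assert (0 < hnorm v ^ 2) by (apply pow_lt; auto).
    assert (a v v / hnorm v ^ 2 * hnorm v ^ 2 = a v v) by (field; lra).
    assert (- epsilon (inhabits 0) (is_lub E) <= a v v / hnorm v ^ 2) by lra.
    apply Rmult_le_compat_r with (r := hnorm v ^ 2) in H3; lra.
Qed.



Theorem mainTheorem4
  (X : Hilbert) (K Pd : nat)
  (Xi : (Fin.t K -> R) -> Prop) (Pset : (Fin.t Pd -> R) -> Prop)
  (a : (Fin.t K -> R) -> (Fin.t Pd -> R) -> X -> X -> R)
  (f l : (Fin.t K -> R) -> (Fin.t Pd -> R) -> X -> R)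
  (Ha : forall y mu, Xi y -> Pset mu ->
          bounded_bilinear_form (a y mu) /\ coercive (a y mu) /\
          0 < coercivity_factor (a y mu))
  (Hf : forall y mu, Xi y -> Pset mu -> bounded_linear_form (f y mu))
  (Hl : forall y mu, Xi y -> Pset mu -> bounded_linear_form (l y mu))
  (XR XR1 XR2 XR3 XR4 : X -> Prop)
  (HXR : is_subspace XR) (HXR1 : is_subspace XR1) (HXR2 : is_subspace XR2)
  (HXR3 : is_subspace XR3) (HXR4 : is_subspace XR4)
  (mu : Fin.t Pd -> R) (Hmu : Pset mu)
  (N : nat) (HN : (2 <= N)%nat)
  (ys : nat -> Fin.t K -> R) (Hys : forall n, (n < N)%nat -> Xi (ys n))
  (u uR uR1 uR2 uR3 uR4 : (Fin.t K -> R) -> X) :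
  let alpha := fun y => coercivity_factor (a y mu) in
  (* residual r(.) = f(.) - a(u^R, .) *)
  let r := fun y v => f y mu v - a y mu (uR y) v in
  (* scalar  l(u^R) - r(u^R_(1)) *)
  let s := fun y => l y mu (uR y) - r y (uR1 y) in
  let l1 := fun y v => l y mu v in
  let l2 := fun y v => 2 * s y * l y mu v in
  let l3 := fun y v => MC_E N (fun n => s (ys n)) * l y mu v in
  let l4 := fun y v => MC_Eu N (fun n => s (ys n)) * l y mu v in
  let r1 := fun y v => - l1 y v - a y mu v (uR1 y) in
  let r2 := fun y v => - l2 y v - a y mu v (uR2 y) in
  let r3 := fun y v => - l3 y v - a y mu v (uR3 y) in
  let r4 := fun y v => - l4 y v - a y mu v (uR4 y) in
  (* defining equations at every sample (y^n, mu) *)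
  (forall n, (n < N)%nat -> forall v, a (ys n) mu (u (ys n)) v = f (ys n) mu v) ->
  (forall n, (n < N)%nat -> XR (uR (ys n)) /\
     forall v, XR v -> a (ys n) mu (uR (ys n)) v = f (ys n) mu v) ->
  (forall n, (n < N)%nat -> XR1 (uR1 (ys n)) /\
     forall v, XR1 v -> a (ys n) mu v (uR1 (ys n)) = - l1 (ys n) v) ->
  (forall n, (n < N)%nat -> XR2 (uR2 (ys n)) /\
     forall v, XR2 v -> a (ys n) mu v (uR2 (ys n)) = - l2 (ys n) v) ->
  (forall n, (n < N)%nat -> XR3 (uR3 (ys n)) /\
     forall v, XR3 v -> a (ys n) mu v (uR3 (ys n)) = - l3 (ys n) v) ->
  (forall n, (n < N)%nat -> XR4 (uR4 (ys n)) /\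
     forall v, XR4 v -> a (ys n) mu v (uR4 (ys n)) = - l4 (ys n) v) ->
  Rabs (MC_V N (fun n => l (ys n) mu (u (ys n)))
        - MC_V N (fun n => l (ys n) mu (uR (ys n)))
        + MC_V N (fun n => r (ys n) (uR1 (ys n)))
        + MC_Eu N (fun n => r (ys n) (uR2 (ys n)))
        - MC_Eu N (fun n => r (ys n) (uR3 (ys n)))
        - MC_E N (fun n => r (ys n) (uR4 (ys n))))
  <= MC_Eu N (fun n => dual_norm (r (ys n)) ^ 2 * dual_norm (r1 (ys n)) ^ 2
                       / alpha (ys n) ^ 2)
     + MC_E N (fun n => dual_norm (r (ys n)) * dual_norm (r1 (ys n)) / alpha (ys n))
       * MC_Eu N (fun n => dual_norm (r (ys n)) * dual_norm (r1 (ys n)) / alpha (ys n))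
     + MC_Eu N (fun n =>
          dual_norm (fun v => r2 (ys n) v - r3 (ys n) v
                              - (INR N - 1) / INR N * r4 (ys n) v)
          * dual_norm (r (ys n)) / alpha (ys n)).
Proof.
  intros alpha r s l1 l2 l3 l4 r1 r2 r3 r4 Hu HuR H1 H2 H3 H4.
  set (p := fun n => l (ys n) mu (uR (ys n))).
  set (q := fun n => r (ys n) (uR1 (ys n))).
  set (e := fun n => hadd (u (ys n)) (hopp (uR (ys n)))).
  set (d := fun n => r1 (ys n) (e n)).
  set (R2 := fun n => r2 (ys n) (e n)).
  set (R3 := fun n => r3 (ys n) (e n)).
  set (R4 := fun n => r4 (ys n) (e n)).
  set (c := (INR N - 1) / INR N).
  set (W := fun n => R2 n - R3 n - c * R4 n).
  assert (Hpt : forall n, (n < N)%nat ->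
     l (ys n) mu (u (ys n)) = p n - q n - d n /\
     r (ys n) (uR2 (ys n)) = 2*(p n - q n)*(d n + q n) - R2 n /\
     r (ys n) (uR3 (ys n)) = MC_E N (fun n => p n - q n)*(d n + q n) - R3 n /\
     r (ys n) (uR4 (ys n)) = MC_Eu N (fun n => p n - q n)*(d n + q n) - R4 n /\
     Rabs (d n) <= dual_norm (r (ys n)) * dual_norm (r1 (ys n)) / alpha (ys n) /\
     Rabs (W n) <= dual_norm (fun v => r2 (ys n) v - r3 (ys n) v
                              - (INR N - 1) / INR N * r4 (ys n) v)
          * dual_norm (r (ys n)) / alpha (ys n)).
  { intros n Hn.
    destruct (Ha (ys n) mu (Hys n Hn) Hmu) as [Hbb [Hco Hal]].
    pose proof (Hf (ys n) mu (Hys n Hn) Hmu) as Hfn.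
    pose proof (Hl (ys n) mu (Hys n Hn) Hmu) as Hln.
    assert (HA : forall v, a (ys n) mu (e n) v = r (ys n) v).
    { intros v. unfold e, r.
      pose proof (lin_sub (fun w => a (ys n) mu w v) (u (ys n)) (uR (ys n)) (proj1 Hbb v)) as L.
      cbv beta in L. rewrite L, (Hu n Hn). ring. }
    assert (Hle : l (ys n) mu (e n) = l (ys n) mu (u (ys n)) - p n).
    { unfold e. apply (lin_sub (l (ys n) mu) (u (ys n)) (uR (ys n)) (proj1 Hln)). }
    assert (Hd : d n = - l (ys n) mu (e n) - q n).
    { unfold d, r1, l1, q. rewrite HA. reflexivity. }
    assert (Hs : s (ys n) = p n - q n) by reflexivity.
    assert (Br : bnd (r (ys n))).
    { unfold r. apply bnd_sub. apply bnd_lin; auto. apply bnd_a2; auto. }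
    destruct (dual_bound _ Br) as [Nr Hr].
    assert (He : hnorm (e n) <= dual_norm (r (ys n)) / alpha (ys n)).
    { pose proof (coerc_bound _ Hbb Hco (e n)) as Hc. rewrite HA in Hc.
      pose proof (Hr (e n)) as Hre. pose proof (Rle_abs (r (ys n) (e n))) as Hab.
      fold (alpha (ys n)) in Hc. fold (alpha (ys n)) in Hal.
      destruct (hnorm_nonneg (e n)) as [Hpos | Hz].
      - apply Rmult_le_reg_l with (alpha (ys n)); auto.
        replace (alpha (ys n) * (dual_norm (r (ys n)) / alpha (ys n))) with (dual_norm (r (ys n))) by (field; lra).
        apply Rmult_le_reg_r with (hnorm (e n)); auto. simpl in Hc. nra.
      - rewrite <- Hz. unfold Rdiv. apply Rmult_le_pos; auto. apply Rlt_le, Rinv_0_lt_compat; auto. }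
    assert (Hdn : forall F, bnd F -> Rabs (F (e n)) <= dual_norm F * dual_norm (r (ys n)) / alpha (ys n)).
    { intros F BF. destruct (dual_bound _ BF) as [NF HF]. eapply Rle_trans; [apply HF|].
      unfold Rdiv. rewrite Rmult_assoc. apply Rmult_le_compat_l; auto. }
    assert (B1 : bnd (r1 (ys n))).
    { unfold r1, l1. apply bnd_sub. apply bnd_opp, bnd_lin; auto. apply bnd_a1; auto. }
    repeat split.
    - lra.
    - unfold R2, r2, l2. rewrite HA, Hs. replace (l (ys n) mu (e n)) with (- d n - q n) by lra. ring.
    - unfold R3, r3, l3. rewrite HA. change (MC_E N (fun k => s (ys k))) with (MC_E N (fun k => p k - q k)). replace (l (ys n) mu (e n)) with (- d n - q n) by lra. ring.
    - unfold R4, r4, l4. rewrite HA. change (MC_Eu N (fun k => s (ys k))) with (MC_Eu N (fun k => p k - q k)). replace (l (ys n) mu (e n)) with (- d n - q n) by lra. ring.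
    - eapply Rle_trans; [apply Hdn; auto|]. right; unfold Rdiv; ring.
    - apply (Hdn (fun v => r2 (ys n) v - r3 (ys n) v - (INR N - 1) / INR N * r4 (ys n) v)).
      apply bnd_sub; [apply bnd_sub|apply bnd_scal]; unfold r2, r3, r4, l2, l3, l4;
        (apply bnd_sub; [apply bnd_opp, bnd_scal, bnd_lin; auto | apply bnd_a1; auto]). }
  pose proof (core N p q d R2 R3 R4 c HN eq_refl) as Hcore.
  rewrite (MC_V_ext N (fun n => l (ys n) mu (u (ys n))) (fun n => p n - q n - d n))
    by (intros n Hn; apply (Hpt n Hn)).
  rewrite (MC_Eu_ext N (fun n => r (ys n) (uR2 (ys n))) (fun n => 2*(p n - q n)*(d n + q n) - R2 n))
    by (intros n Hn; apply (Hpt n Hn)).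
  rewrite (MC_Eu_ext N (fun n => r (ys n) (uR3 (ys n))) (fun n => MC_E N (fun n => p n - q n)*(d n + q n) - R3 n))
    by (intros n Hn; apply (Hpt n Hn)).
  rewrite (MC_E_ext N (fun n => r (ys n) (uR4 (ys n))) (fun n => MC_Eu N (fun n => p n - q n)*(d n + q n) - R4 n))
    by (intros n Hn; apply (Hpt n Hn)).
  change (MC_V N (fun n => l (ys n) mu (uR (ys n)))) with (MC_V N p).
  change (MC_V N (fun n => r (ys n) (uR1 (ys n)))) with (MC_V N q).
  rewrite Hcore. fold W.
  set (B := fun n => dual_norm (r (ys n)) * dual_norm (r1 (ys n)) / alpha (ys n)).
  assert (T1 : Rabs (MC_Eu N W) <= MC_Eu N (fun n =>
          dual_norm (fun v => r2 (ys n) v - r3 (ys n) v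
                              - (INR N - 1) / INR N * r4 (ys n) v)
          * dual_norm (r (ys n)) / alpha (ys n))).
  { apply MC_Eu_abs; auto. intros n Hn; apply (Hpt n Hn). }
  assert (T2 : Rabs (MC_Eu N (fun n => d n ^ 2)) <= MC_Eu N (fun n => dual_norm (r (ys n)) ^ 2 * dual_norm (r1 (ys n)) ^ 2
                       / alpha (ys n) ^ 2)).
  { apply MC_Eu_abs; auto. intros n Hn. destruct (Hpt n Hn) as [_ [_ [_ [_ [Hb _]]]]].
    destruct (Ha (ys n) mu (Hys n Hn) Hmu) as [_ [_ Hal]]. fold (alpha (ys n)) in Hal.
    replace (dual_norm (r (ys n)) ^ 2 * dual_norm (r1 (ys n)) ^ 2 / alpha (ys n) ^ 2)
      with ((dual_norm (r (ys n)) * dual_norm (r1 (ys n)) / alpha (ys n)) ^ 2) by (field; lra).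
    rewrite <- RPow_abs. apply pow_incr. split; auto using Rabs_pos. }
  assert (T3 : Rabs (MC_Eu N d) <= MC_Eu N B).
  { apply MC_Eu_abs; auto. intros n Hn; apply (Hpt n Hn). }
  assert (T4 : Rabs (MC_E N d) <= MC_E N B).
  { apply MC_E_abs; auto. intros n Hn; apply (Hpt n Hn). }
  assert (T5 : Rabs (MC_Eu N d * MC_E N d) <= MC_E N B * MC_Eu N B).
  { rewrite Rabs_mult, Rmult_comm. apply Rmult_le_compat; auto using Rabs_pos. }
  fold B.
  eapply Rle_trans; [apply Rabs_triang|]. rewrite Rabs_Ropp.
  eapply Rle_trans; [apply Rplus_le_compat_r, Rabs_triang|]. rewrite Rabs_Ropp. unfold c in *. lra.
Qed.
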